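(* Let $T$ be a tropical curve with a real structure. Then $s(T)\le g(T)+1$, $s(T)\equiv g(T)+1\pmod 2$, and $s(T)\le g(T)-1$ if $a(T)=1$.
   Context: A metric graph is a compact connected metric space locally isometric to star-shaped sets $\{te^{2k\pi i/n}:0\le t<r,k\in\mathbb Z\}\subset\mathbb C$. A tropical curve $T$ is a connected metric space which is the union of a metric graph $\Gamma$ (its finite part) and finitely many unbounded edges $e$, each isometric to $[0,\infty]$ and meeting the closure of $T\setminus e$ exactly in one point $e(0)\in\Gamma$ corresponding to $0$. The genus $g(T)$ is the first Betti number of $T$ (equal to that of $\Gamma$). A real structure on $T$ is an isometry $\iota:T\to T$ with $\iota^2=\mathrm{id}$; $\overline p=\iota(p)$, and $p$ is real if $\overline p=p$. $T(\mathbb R)$ is the set of real points, with finitely many connected components $T_1,\dots,T_{s'}$; $s(T)=\sum_{i}(g(T_i)+1)$, $g(T_i)$ the first Betti number of $T_i$. $a(T)=1$ if some non-real point $p$ is connected to $\overline p$ by a path in $T$ containing no real point, and $a(T)=0$ otherwise. *)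

(* Defs.v *)
From HB Require Import structures.
From mathcomp Require Import all_boot all_order all_algebra.
From mathcomp Require Import reals.

Set Implicit Arguments.
Unset Strict Implicit.
Unset Printing Implicit Defensive.

Import Order.TTheory GRing.Theory Num.Theory.
Local Open Scope ring_scope.

Definition graph_adj (V E : finType) (src tgt : E -> V) : rel V :=
  fun u v => [exists e, ((src e == u) && (tgt e == v)) || ((src e == v) && (tgt e == u))].

(* A tropical curve T given by a model: finite multigraph (loops and multiple
   edges allowed) with vertices rV, bounded edges rE of length len e > 0, and
   unbounded edges (legs) rL attached at base l.  A real structure is an
   isometric involution, given on the model by involutions conjV, conjE, conjL
   compatible with incidences and lengths; an edge with conjE e = e is fixed
   pointwise (every real structure admits such an adapted model, after
   subdividing the edges reversed by the involution at their midpoints). *)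
Record rtcurve (R : realType) := RTCurve {
  rV : finType;
  rE : finType;
  rL : finType;
  src : rE -> rV;
  tgt : rE -> rV;
  base : rL -> rV;
  len : rE -> R;
  len_pos : forall e, 0 < len e;
  conjV : rV -> rV;
  conjE : rE -> rE;
  conjL : rL -> rL;
  conjV_inv : involutive conjV;
  conjE_inv : involutive conjE;
  conjL_inv : involutive conjL;
  conj_src : forall e, src (conjE e) = conjV (src e);
  conj_tgt : forall e, tgt (conjE e) = conjV (tgt e);
  conj_base : forall l, base (conjL l) = conjV (base l);
  conj_len : forall e, len (conjE e) = len e;
  rV_nonempty : (0 < #|rV|)%N;
  rconnected : forall u v, connect (graph_adj src tgt) u v
}.

Section Invariants.
Variables (R : realType) (T : rtcurve R).

(* first Betti number of the (connected) curve: |E| - |V| + 1 (legs do not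
   change it) *)
Definition genus : int := #|rE T|%:Z - #|rV T|%:Z + 1.

Definition realV : {set rV T} := [set v | conjV v == v].
Definition realE : {set rE T} := [set e | conjE e == e].

Definition real_adj : rel (rV T) :=
  fun u v => [exists e in realE,
    ((src e == u) && (tgt e == v)) || ((src e == v) && (tgt e == u))].

(* connected components T_1, ..., T_s' of T(R) (real legs are contractible
   and attached at real vertices, so they do not affect components or genus) *)
Definition real_comp (v : rV T) : {set rV T} := [set u | connect real_adj v u].
Definition real_components : {set {set rV T}} := [set real_comp v | v in realV].

Definition comp_genus (C : {set rV T}) : int :=
  #|[set e in realE | src e \in C]|%:Z - #|C|%:Z + 1.

Definition s_inv : int := \sum_(C in real_components) (comp_genus C + 1).

Definition node := ((rV T + rE T) + rL T)%type.

Definition conjN (x : node) : node :=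
  match x with
  | inl (inl v) => inl (inl (conjV v))
  | inl (inr e) => inl (inr (conjE e))
  | inr l => inr (conjL l)
  end.

Definition nonreal (x : node) : bool := conjN x != x.

Definition incident (x y : node) : bool :=
  match x, y with
  | inl (inr e), inl (inl v) => (src e == v) || (tgt e == v)
  | inr l, inl (inl v) => base l == v
  | _, _ => false
  end.

(* adjacency of non-real cells; its connected components are those of T \ T(R) *)
Definition nr_adj : rel node :=
  fun x y => [&& nonreal x, nonreal y & incident x y || incident y x].

Definition a_inv : bool := [exists x, nonreal x && connect nr_adj x (conjN x)].

End Invariants.

(* Main.v *)
Require Import Defs.
From mathcomp Require Import all_boot all_order all_algebra.
From mathcomp Require Import reals.
From mathcomp Require Import zify.
Set Implicit Arguments.
Unset Strict Implicit.
Unset Printing Implicit Defensive.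

Section Tree.
Variables (V E : finType) (src tgt : E -> V) (B : {set E}) (v0 : V) (sigma : E -> bool).

Definition adjB : rel V := fun u v => [exists e in B,
  ((src e == u) && (tgt e == v)) || ((src e == v) && (tgt e == u))].
Definition Pd u n := [exists t : n.-tuple V, path adjB v0 t && (last v0 t == u)].
Definition dist u := find (Pd u) (iota 0 #|V|).

Lemma dist_le p u : path adjB v0 p -> last v0 p = u -> size p < #|V| -> dist u <= size p.
Proof.
move=> pp lp sp; rewrite leqNgt; apply/negP => /(before_find 0).
rewrite nth_iota // add0n => h.
suff : Pd u (size p) by rewrite h.
apply/existsP; exists (in_tuple p); by rewrite pp lp eqxx.
Qed.

Lemma dist_P u : connect adjB v0 u -> Pd u (dist u) && (dist u < #|V|).
Proof.
case/connectP => p0 pp0 ->.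
case: (shortenP pp0) => p pp up _.
have sp : size p < #|V|.
  by rewrite -ltnS -[(size p).+1]/(size (v0 :: p)) -(card_uniqP up) ltnS max_card.
have hs : has (Pd (last v0 p)) (iota 0 #|V|).
  apply/hasP; exists (size p); first by rewrite mem_iota.
  rewrite /Pd; apply/existsP; exists (in_tuple p); by rewrite pp eqxx.
have hf := hs; rewrite has_find size_iota in hf.
have := nth_find 0 hs; rewrite nth_iota // add0n => ->.
exact: hf.
Qed.

Definition good u e := (e \in B) &&
  (((src e == u) && (dist (tgt e) < dist u)) || ((tgt e == u) && (dist (src e) < dist u))).
Definition fedge u := [pick e | good u e].
Definition other u e := if src e == u then tgt e else src e.

Lemma good_other u e : good u e -> dist (other u e) < dist u.
Proof.
rewrite /good /other => /andP [_ /orP [/andP [/eqP -> h]| /andP [/eqP h1 h]]].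
  by rewrite eqxx.
case: eqP => [h2|//]; by rewrite h2 ltnn in h.
Qed.

Lemma good_ex u : connect adjB v0 u -> u != v0 -> exists e, good u e.
Proof.
move=> cu nu; case/andP: (dist_P cu) => /existsP [t /andP [pt /eqP lt]] dl.
case: t pt lt => s sz /= pt lt; move/eqP: sz => sz.
move: pt lt dl sz; case: (lastP s) => [|q w]; first by move=> _ /= h; rewrite h eqxx in nu.
rewrite rcons_path last_rcons size_rcons => /andP [pq aw] ew; subst w => dl sz.
have dq : dist (last v0 q) <= size q by apply: (dist_le pq erefl); lia.
case/existsP: aw => e /andP [eB he]; exists e; rewrite /good eB /= -sz.
case/orP: he => /andP [/eqP -> /eqP ->]; rewrite eqxx /=.
  by rewrite !ltnS dq orbT.
by rewrite !ltnS dq.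
Qed.

Lemma good_inj u u' e : good u e -> good u' e -> u = u'.
Proof.
rewrite /good => /andP [_ h] /andP [_ h'].
case/orP: h => /andP [/eqP h1 h2]; case/orP: h' => /andP [/eqP h3 h4];
  subst; rewrite ?h3 //; lia.
Qed.

Fixpoint lamF n u := if n is n'.+1 then
  (if fedge u is Some e then lamF n' (other u e) (+) sigma e else false) else false.

Lemma lamF_stable n m u : dist u < n -> dist u < m -> lamF n u = lamF m u.
Proof.
elim: n m u => [//|n IH] [//|m] u hn hm /=.
rewrite /fedge; case: pickP => [e ge|//]; congr (_ (+) _); apply: IH.
  exact: leq_trans (good_other ge) hn.
exact: leq_trans (good_other ge) hm.
Qed.

Definition Rset := [set u | connect adjB v0 u].

Lemma tree_count : #|Rset| <= #|B| + 1 /\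
  (#|B| < #|Rset| -> exists lam : V -> bool, forall e, e \in B -> lam (src e) (+) lam (tgt e) = sigma e).
Proof.
set D := Rset :\ v0.
have v0R : v0 \in Rset by rewrite inE connect0.
have cR : #|Rset| = #|D|.+1 by rewrite (cardsD1 v0) v0R.
have fD : forall u, u \in D -> exists2 e, fedge u = Some e & good u e.
  move=> u; rewrite !inE => /andP [nu cu].
  rewrite /fedge; case: pickP => [e ge|none]; first by exists e.
  by case: (good_ex cu nu) => e; rewrite none.
have injD : {in D &, injective fedge}.
  move=> u u' uD u'D; case: (fD u uD) => e -> ge; case: (fD u' u'D) => e' -> ge' [ee'].
  by subst; exact: good_inj ge ge'.
have sub : fedge @: D \subset Some @: B.
  apply/subsetP => x /imsetP [u uD ->]; case: (fD u uD) => e -> /andP [eB _].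
  exact: imset_f.
have cB : #|Some @: B| = #|B| by rewrite card_imset //; exact: Some_inj.
have cD : #|fedge @: D| = #|D| := card_in_imset injD.
have le1 := subset_leq_card sub; rewrite cB cD in le1.
split; first by rewrite cR addn1 ltnS.
rewrite cR ltnS => hBD.
have eqs : fedge @: D = Some @: B.
  by apply/eqP; rewrite eqEcard sub cB cD hBD.
exists (lamF #|V|) => e eB.
have : Some e \in fedge @: D by rewrite eqs imset_f.
case/imsetP => u uD he.
case: (fD u uD) => e' he' ge; rewrite he' in he; case: he => ?; subst e'.
have cu : connect adjB v0 u by move: uD; rewrite !inE => /andP [].
case/andP: (dist_P cu) => _ dl.
have go := good_other ge.
have key : lamF #|V| u (+) lamF #|V| (other u e) = sigma e.
  move: dl go; case: #|V| => [//|n] dl go.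
  rewrite (lamF_stable (n:=n.+1) (m:=n) (u:=other u e)); [| lia | lia].
  by rewrite /= he' addbC addKb.
move: key ge; rewrite /other /good; case: eqP => [-> //|ns key].
case/andP => _ /orP [/andP [//] | /andP [/eqP -> _]].
by rewrite addbC.
Qed.
End Tree.

Lemma inv_card (X : finType) (c : X -> X) : involutive c ->
  #|X| = (#|[set x | c x == x]| + 2 * #|[set x | enum_rank x < enum_rank (c x)]|)%N.
Proof.
move=> ci.
set F := [set x | c x == x]; set L := [set x | enum_rank x < enum_rank (c x)].
have eG : ~: F = L :|: c @: L.
  apply/setP => x; rewrite (can_imset_pre _ ci) !inE ci.
  case: ltngtP => h; rewrite ?orbT ?orbF //.
  - by apply/negP => /eqP e; rewrite e ltnn in h.
  - by apply/negP => /eqP e; rewrite e ltnn in h.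
  - by rewrite -(enum_rank_inj (val_inj h)) eqxx.
have dj : L :&: c @: L = set0.
  apply/setP => x; rewrite (can_imset_pre _ ci) !inE ci; lia.
rewrite -(cardsC F) eG cardsU dj cards0 subn0 card_imset; last exact: can_inj ci.
lia.
Qed.

Section Main.
Variables (R : realType) (T : rtcurve R).
Local Notation V := (rV T).
Local Notation E := (rE T).

Lemma cVi : involutive (@conjV R T). Proof. exact: conjV_inv. Qed.
Lemma cEi : involutive (@conjE R T). Proof. exact: conjE_inv. Qed.

Lemma real_adj_real (u w : V) : (@real_adj R T) u w -> (conjV u == u) && (conjV w == w).
Proof.
case/existsP => e /andP [].
rewrite inE => /eqP he.
have hs : conjV (src e) = src e by rewrite -conj_src he.
have ht : conjV (tgt e) = tgt e by rewrite -conj_tgt he.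
by case/orP => /andP [/eqP h1 /eqP h2]; subst; rewrite hs ht !eqxx.
Qed.

Lemma real_adj_sym : symmetric ((@real_adj R T)).
Proof.
move=> u w; apply/existsP/existsP => [] [e /andP [eR h]]; exists e; rewrite eR /=;
  by rewrite orbC.
Qed.

Lemma csym : connect_sym ((@real_adj R T)).
Proof. exact: sym_connect_sym real_adj_sym. Qed.

Lemma comp_real (v u : V) : u \in real_comp v -> conjV v == v -> conjV u == u.
Proof.
rewrite inE => cvu rv.
have cl : closed ((@real_adj R T)) [pred x | conjV x == x].
  by move=> x y /real_adj_real /andP [hx hy]; rewrite !inE hx hy.
by have := closed_connect cl cvu; rewrite !inE rv => <-.
Qed.

Lemma comp_eq (v w : V) : connect ((@real_adj R T)) v w -> real_comp v = real_comp w.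
Proof. by move=> c; apply/setP => x; rewrite !inE (same_connect csym c). Qed.

Definition cls (v : V) : {set V} :=
  if conjV v == v then real_comp v else [set v; conjV v].

Lemma cls_conj (v : V) : cls (conjV v) = cls v.
Proof.
rewrite /cls cVi; case: (eqVneq (conjV v) v) => [-> // | h].
by apply/setP => x; rewrite !inE orbC.
Qed.


Definition Ep : {set E} := [set e | enum_rank e < enum_rank (conjE e)].
Definition Vp : {set V} := [set v | enum_rank v < enum_rank (conjV v)].
Definition srcQ (e : E) := cls (src e).
Definition tgtQ (e : E) := cls (tgt e).
Definition adjQ := adjB srcQ tgtQ Ep.

Lemma adjQ_sym : symmetric adjQ.
Proof.
move=> u w; apply/existsP/existsP => [] [e /andP [eR h]]; exists e; rewrite eR /=;
  by rewrite orbC.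
Qed.

Lemma real_src (e : E) : conjE e = e -> conjV (src e) = src e.
Proof. by move=> he; rewrite -conj_src he. Qed.
Lemma real_tgt (e : E) : conjE e = e -> conjV (tgt e) = tgt e.
Proof. by move=> he; rewrite -conj_tgt he. Qed.

Lemma stepQ (x y : V) : graph_adj (@src R T) (@tgt R T) x y -> connect adjQ (cls x) (cls y).
Proof.
case/existsP => e h.
wlog: x y h / (src e == x) && (tgt e == y).
  move=> W; case/orP: h => h; first by apply: W => //; rewrite h.
  by rewrite (sym_connect_sym adjQ_sym); apply: W => //; rewrite h.
case/andP => /eqP <- /eqP <-.
case: (ltngtP (enum_rank e) (enum_rank (conjE e))) => hr.
- apply: connect1; rewrite /adjQ /adjB; apply/existsP; exists e; by rewrite inE hr /srcQ /tgtQ !eqxx.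
- apply: connect1; rewrite /adjQ /adjB; apply/existsP; exists (conjE e).
  by rewrite inE cEi hr /= /srcQ /tgtQ conj_src conj_tgt !cls_conj !eqxx.
- have he : conjE e = e by exact: esym (enum_rank_inj (val_inj hr)).
  have ra : (@real_adj R T) (src e) (tgt e).
    by apply/existsP; exists e; rewrite inE he !eqxx.
  by rewrite /cls (real_src he) (real_tgt he) !eqxx (comp_eq (connect1 ra)) connect0.
Qed.

Lemma liftQ (x y : V) : connect (graph_adj (@src R T) (@tgt R T)) x y -> connect adjQ (cls x) (cls y).
Proof.
case/connectP => p; elim: p x => [|z p IH] x /=; first by move=> _ ->; exact: connect0.
case/andP => a pp ly; exact: connect_trans (stepQ a) (IH _ pp ly).
Qed.

Lemma Vp_nonreal (v : V) : v \in Vp -> conjV v != v.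
Proof. by rewrite inE; apply: contraL => /eqP ->; rewrite ltnn. Qed.

Lemma lowerQ (v0 : V) :
  (#|real_components T| + #|Vp| <= #|Rset srcQ tgtQ Ep (cls v0)|)%N.
Proof.
set P := [set [set v; conjV v] | v in Vp].
have allR : forall x, cls x \in Rset srcQ tgtQ Ep (cls v0).
  by move=> x; rewrite inE; apply: liftQ; apply: rconnected.
have s1 : real_components T :|: P \subset Rset srcQ tgtQ Ep (cls v0).
  apply/subsetP => X; rewrite inE => /orP [] /imsetP [v vR ->].
    by have := allR v; rewrite /cls; rewrite inE in vR; rewrite vR.
  by have := allR v; rewrite /cls (negbTE (Vp_nonreal vR)).
have dj : real_components T :&: P = set0.
  apply/setP => X; rewrite !inE; apply/negP => /andP [/imsetP [w wR ->] /imsetP [v vV eq]].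
  have : v \in real_comp w by rewrite eq set21.
  move/comp_real; rewrite inE in wR; move/(_ wR) => vr.
  by move: (Vp_nonreal vV); rewrite vr.
have cP : #|P| = #|Vp|.
  apply: card_in_imset => v w vV wV eq.
  have : v \in [set w; conjV w] by rewrite -eq set21.
  rewrite !inE => /orP [/eqP //| /eqP vw].
  have wv : w = conjV v by rewrite vw cVi.
  move: vV wV; rewrite !inE -wv -vw; lia.
have := subset_leq_card s1; rewrite cardsU dj cards0 subn0 cP //.
Qed.


Lemma sum_bool (I : finType) (A : {pred I}) (b : pred I) :
  (\sum_(i in A) (b i : nat))%N = #|[set i in A | b i]|.
Proof.
rewrite -sum1_card big_mkcond [RHS]big_mkcond /=; apply: eq_bigr => i _.
by rewrite !inE; case: (i \in A); case: (b i).
Qed.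

Lemma comp_unique (w : V) : conjV w == w ->
  [set C in real_components T | w \in C] = [set real_comp w].
Proof.
move=> rw; apply/setP => C; rewrite !inE; apply/andP/eqP.
  case => /imsetP [v vR ->]; rewrite inE => c; exact: comp_eq.
move=> ->; split; last by rewrite inE connect0.
by apply: imset_f; rewrite inE.
Qed.

Lemma sum_part (X : finType) (h : X -> V) (S : {set X}) :
  (forall x, x \in S -> conjV (h x) == h x) ->
  (\sum_(C in real_components T) #|[set x in S | h x \in C]|)%N = #|S|.
Proof.
move=> hS.
transitivity (\sum_(C in real_components T) \sum_(x in S) (h x \in C : nat))%N.
  by apply: eq_bigr => C _; rewrite sum_bool.
rewrite exchange_big /= -sum1_card; apply: eq_bigr => x xS.
by rewrite sum_bool (comp_unique (hS x xS)) cards1.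
Qed.

Lemma sum_EC : (\sum_(C in real_components T) #|[set e in realE T | src e \in C]|)%N = #|realE T|.
Proof. by apply: sum_part => e; rewrite inE => /eqP he; rewrite (real_src he). Qed.

Lemma sum_C : (\sum_(C in real_components T) #|C|)%N = #|realV T|.
Proof.
rewrite -(sum_part (h:=id) (S:=realV T)); last by move=> x; rewrite inE.
apply: eq_bigr => C /imsetP [w wR ->]; apply: eq_card => x; rewrite !inE.
case c: (connect _ w x); rewrite ?andbF // andbT.
rewrite inE in wR; apply/esym; apply: (comp_real (v:=w)) => //; by rewrite inE.
Qed.


Definition mu (v : V) : bool := enum_rank v < enum_rank (conjV v).

Lemma mu_conj (v : V) : conjV v != v -> mu (conjV v) = ~~ mu v.
Proof.
move=> nv; rewrite /mu cVi; case: ltngtP => h //=.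
by move: nv; rewrite (enum_rank_inj (val_inj h)) eqxx.
Qed.

Section Theta.
Variable lam : {set V} -> bool.
Hypothesis hlam : forall e, e \in Ep -> lam (srcQ e) (+) lam (tgtQ e) = mu (src e) (+) mu (tgt e).

Definition theta (v : V) := mu v (+) lam (cls v).

Lemma theta_conj (v : V) : conjV v != v -> theta (conjV v) = ~~ theta v.
Proof. by move=> nv; rewrite /theta mu_conj // cls_conj addNb. Qed.

Lemma theta_Ep (e : E) : e \in Ep -> theta (src e) = theta (tgt e).
Proof.
move=> eE; move: (hlam eE); rewrite /theta /srcQ /tgtQ.
by case: (lam (cls (src e))); case: (lam (cls (tgt e))); case: (mu (src e)); case: (mu (tgt e)).
Qed.

Lemma theta_edge (e : E) : conjE e != e -> conjV (src e) != src e -> conjV (tgt e) != tgt e ->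
  theta (src e) = theta (tgt e).
Proof.
move=> ne ns nt.
case: (boolP (e \in Ep)) => eE; first exact: theta_Ep.
have cE : conjE e \in Ep.
  move: eE; rewrite !inE cEi -leqNgt leq_eqVlt => /orP [/eqP h|//].
  by move: ne; rewrite (enum_rank_inj (val_inj h)) eqxx.
have := theta_Ep cE; rewrite conj_src conj_tgt !theta_conj //.
exact: negb_inj.
Qed.

Definition Theta (x : node T) : bool :=
  match x with
  | inl (inl v) => theta v
  | inl (inr e) => if conjV (src e) != src e then theta (src e) else theta (tgt e)
  | inr l => theta (base l)
  end.

Lemma Theta_inc (x y : node T) : nonreal x -> nonreal y -> incident x y -> Theta x = Theta y.
Proof.
case: x => [[v|e]|l]; case: y => [[w|f]|l'] //=; rewrite /nonreal /=.
- move=> ne nw; case: ifP => ns.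
    case/orP => /eqP h; subst w => //; apply: theta_edge => //.
  case/orP => /eqP h; subst w => //.
  by have nw2 : conjV (src e) != src e := nw; rewrite ns in nw2.
- by move=> _ _ /eqP ->.
Qed.

Lemma Theta_adj (x y : node T) : nr_adj x y -> Theta x = Theta y.
Proof.
case/and3P => nx ny /orP [h|h]; first exact: Theta_inc.
by apply/esym; apply: Theta_inc.
Qed.

Lemma Theta_conj (x y : node T) : nr_adj x y -> Theta (conjN x) = ~~ Theta x.
Proof.
case/and3P; case: x => [[v|e]|l]; case: y => [[w|f]|l'] //=; rewrite /nonreal /=;
  rewrite ?orbF => nx ny inc.
all: try by exact: theta_conj.
- rewrite conj_src conj_tgt cVi [src e == _]eq_sym.
  case: ifP => ns; first by rewrite theta_conj.
  have ny2 : conjV w != w := ny.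
  have nt : conjV (tgt e) != tgt e.
    case/orP: inc => /eqP h; subst w => //.
    by rewrite ns in ny2.
  by rewrite theta_conj.
- by rewrite conj_base theta_conj //; move/eqP: inc => ->.
Qed.

End Theta.

Lemma part3 (v0 : V) : a_inv T -> (#|real_components T| + #|Vp| <= #|Ep|)%N.
Proof.
move=> ha; rewrite leqNgt; apply/negP => hlt.
have hl := lowerQ v0.
case: (tree_count srcQ tgtQ Ep (cls v0) (fun e => mu (src e) (+) mu (tgt e))) => _.
move/(_ (leq_trans hlt hl)) => [lam hlam].
case/existsP: ha => x /andP [nx c].
have cl : closed (@nr_adj R T) [pred z | Theta lam z == Theta lam x].
  by move=> a b /(Theta_adj hlam); rewrite !inE => ->.
have := closed_connect cl c; rewrite !inE eqxx => /eqP hc.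
case/connectP: c => [[|y p]] /=.
  by move=> _ h; rewrite /nonreal h eqxx in nx.
case/andP => axy _ _; move: hc; rewrite (@Theta_conj lam _ _ axy).
by case: (Theta lam x).
Qed.

Lemma counts : #|E| = (#|realE T| + 2 * #|Ep|)%N /\ #|V| = (#|realV T| + 2 * #|Vp|)%N.
Proof. split; [exact: (inv_card cEi) | exact: (inv_card cVi)]. Qed.

Lemma PoszS (I : finType) (A : {pred I}) (F : I -> nat) :
  Posz (\sum_(i in A) F i)%N = (\sum_(i in A) (F i)%:Z)%R.
Proof. exact: (big_morph Posz PoszD (erefl _)). Qed.

Lemma s_formula : s_inv T = ((#|realE T| + 2 * #|real_components T|)%N%:Z - #|realV T|%:Z)%R.
Proof.
rewrite /s_inv.
transitivity (\sum_(C in real_components T)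
   ((#|[set e in realE T | src e \in C]| + 2)%N%:Z - #|C|%:Z))%R.
  apply: eq_bigr => C _; rewrite /comp_genus; lia.
rewrite GRing.sumrB -!PoszS big_split /= sum_EC sum_C sum_nat_const; by rewrite mulnC.
Qed.

End Main.

Import Order.TTheory GRing.Theory Num.Theory.
Local Open Scope ring_scope.
Unset Implicit Arguments.

Theorem proposition5 (R : realType) (T : rtcurve R) :
  s_inv T <= genus T + 1 /\
  (s_inv T = genus T + 1 %[mod 2])%Z /\
  (a_inv T -> s_inv T <= genus T - 1).
Proof.
case/card_gt0P: (rV_nonempty T) => v0 _.
have [h1 _] := tree_count (@srcQ R T) (@tgtQ R T) (Ep T) (cls v0) (fun _ => false).
have hl := lowerQ v0.
have [cE cV] := counts T.
have hs := s_formula T.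
have hg : genus T = #|rE T|%:Z - #|rV T|%:Z + 1 by [].
rewrite hs hg cE cV.
split; first lia.
split; last by move=> /(part3 v0) h3; lia.
apply/eqP; rewrite eqz_mod_dvd; apply/dvdzP.
exists (- (Posz #|Ep T| + 1 - Posz #|real_components T| - Posz #|Vp T|)); lia.
Qed.
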